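(* Consider the discrete-time system $x_{k+1}=A_kx_k+b_ku_k$ ($k\in\mathbb{Z}$) with $A_k\in\mathbb{R}^{n\times n}$, $b_k\in\mathbb{R}^{n\times1}$, and for $k\in\mathbb{Z}$ let $W_k=[\,b_k,\ A_kb_{k-1},\ A_kA_{k-1}b_{k-2},\ \dots,\ A_k\cdots A_{k-n+2}b_{k-n+1}\,]$. The system is completely controllable if and only if $W_k$ is nonsingular for every $k\in\mathbb{Z}$.
   Context: Complete controllability: for every $k\in\mathbb{Z}$ and every $\xi_s,\xi_f\in\mathbb{R}^n$ there are controls $u_k,\dots,u_{k+n-1}$ such that $x_k=\xi_s$ implies $x_{k+n}=\xi_f$. *)

(* Defs.v *)
From mathcomp Require Import all_boot all_order all_algebra.
From mathcomp Require Import reals.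
Set Implicit Arguments. Unset Strict Implicit. Unset Printing Implicit Defensive.
Import Order.TTheory GRing.Theory Num.Theory.
Local Open Scope ring_scope.

Section LTV.
Variables (R : realType) (n : nat).
Variables (A : int -> 'M[R]_n) (b : int -> 'cV[R]_n).

Fixpoint traj (u : int -> R) (k0 : int) (xi : 'cV[R]_n) (m : nat) : 'cV[R]_n :=
  match m with
  | 0 => xi
  | m'.+1 => A (k0 + m'%:Z) *m traj u k0 xi m' + u (k0 + m'%:Z) *: b (k0 + m'%:Z)
  end.

Definition completely_controllable : Prop :=
  forall (k : int) (xi_s xi_f : 'cV[R]_n),
    exists u : int -> R, traj u k xi_s n = xi_f.

Fixpoint Aprod (k : int) (j : nat) : 'M[R]_n :=
  match j with
  | 0 => 1%:M
  | j'.+1 => Aprod k j' *m A (k - j'%:Z)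
  end.

Definition Wmx (k : int) : 'M[R]_n :=
  \matrix_(i < n, j < n) (Aprod k j *m b (k - (j : nat)%:Z)) i 0.

End LTV.

(* Main.v *)
Require Import Defs.
From mathcomp Require Import all_boot all_order all_algebra.
From mathcomp Require Import reals zify.
Import GRing.Theory Num.Theory.
Local Open Scope ring_scope.
Section S.
Variables (R : realType) (n : nat) (A : int -> 'M[R]_n) (b : int -> 'cV[R]_n).

Lemma Aprod_shift k j : Aprod A k j.+1 = A k *m Aprod A (k - 1) j.
Proof.
elim: j => [|j IH]; first by rewrite /= subr0 mul1mx mulmx1.
rewrite -[Aprod _ k j.+2]/(Aprod A k j.+1 *m A (k - j.+1%:Z)) IH -mulmxA [Aprod _ _ j.+1]/=; congr (_ *m (_ *m A _)); lia.
Qed.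

Lemma trajS u k0 xi m : traj A b u k0 xi m.+1 =
  A (k0 + m%:Z) *m traj A b u k0 xi m + u (k0 + m%:Z) *: b (k0 + m%:Z).
Proof. by []. Qed.

Lemma traj_formula u k0 xi m :
  traj A b u k0 xi m = Aprod A (k0 + m%:Z - 1) m *m xi
   + \sum_(j < m) u (k0 + m%:Z - 1 - j%:Z) *: (Aprod A (k0 + m%:Z - 1) j *m b (k0 + m%:Z - 1 - j%:Z)).
Proof.
elim: m => [|m IH]; first by rewrite /= mul1mx big_ord0 addr0.
rewrite trajS IH.
have -> : k0 + m.+1%:Z - 1 = k0 + m%:Z by lia.
set e := k0 + m%:Z.
rewrite big_ord_recl subr0 [Aprod _ _ 0]/= mul1mx Aprod_shift -mulmxA mulmxDr mulmx_sumr.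
rewrite -addrA; congr (_ + _); rewrite addrC; congr (_ + _).
apply: eq_bigr => j _; rewrite Aprod_shift -scalemxAr mulmxA.
have -> : e - (bump 0 j)%:Z = e - 1 - j%:Z by rewrite /bump /=; lia.
by [].
Qed.

Lemma Wmx_mul k (v : 'cV[R]_n) :
  Wmx A b k *m v = \sum_(j < n) v j 0 *: (Aprod A k j *m b (k - j%:Z)).
Proof.
apply/matrixP => i l; rewrite !mxE summxE; apply: eq_bigr => j _.
by rewrite !mxE (ord1 l) mulrC.
Qed.


End S.

Theorem claim1 (R : realType) (n : nat)
    (A : int -> 'M[R]_n) (b : int -> 'cV[R]_n) :
  completely_controllable A b <-> (forall k : int, Wmx A b k \in unitmx).
Proof.
split.
- move=> H k.
  have surj : forall y : 'cV[R]_n, exists v, Wmx A b k *m v == y.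
    move=> y; have [u Hu] := H (k - n%:Z + 1) 0 y.
    rewrite traj_formula mulmx0 add0r in Hu.
    have He : k - n%:Z + 1 + n%:Z - 1 = k by lia.
    rewrite He in Hu.
    exists (\col_(j < n) u (k - j%:Z)); apply/eqP; rewrite Wmx_mul -Hu.
    by apply: eq_bigr => j _; rewrite mxE.
  pose X := \matrix_(i < n, j < n) (xchoose (surj (delta_mx j 0))) i 0.
  suff /mulmx1_unit[] : Wmx A b k *m X = 1%:M by [].
  apply/matrixP => i j; rewrite !mxE.
  have := xchooseP (surj (delta_mx j 0)) => /eqP /matrixP /(_ i 0).
  rewrite !mxE eqxx andbT => <-.
  by apply: eq_bigr => l _; rewrite /X !mxE.
- move=> H k0 xs xf.
  set e := k0 + n%:Z - 1.
  pose v := invmx (Wmx A b e) *m (xf - Aprod A e n *m xs).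
  pose u := fun t : int => \sum_(j < n) (if e - t == j%:Z then v j 0 else 0).
  exists u; rewrite traj_formula -/e.
  have -> : \sum_(j < n) u (e - j%:Z) *: (Aprod A e j *m b (e - j%:Z))
      = Wmx A b e *m v.
    rewrite Wmx_mul; apply: eq_bigr => j _; congr (_ *: _).
    rewrite /u; have -> : e - (e - j%:Z) = j%:Z by lia.
    rewrite (bigD1 j) //= eqxx big1 ?addr0 // => l hl.
    rewrite eqz_nat; case: eqP => // hj; case/negP: hl; apply/eqP/val_inj; by rewrite /= hj.
  by rewrite /v mulmxA mulmxV ?mul1mx // addrC subrK.
Qed.
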